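(* The unary unbiased black-box complexity of the $\mathrm{DLB}$ problem is $O(n^2)$.
   Context: Let $n$ be an even positive integer. For $x\in\{0,1\}^n$ consider the blocks $(x_{2\ell+1},x_{2\ell+2})$, $\ell=0,\dots,\frac n2-1$. If $x\neq(1,\dots,1)$, let $m$ be the smallest $\ell$ with $x_{2\ell+1}\neq 1$ or $x_{2\ell+2}\neq 1$, and define $\mathrm{DLB}(x)=2m+1$ if $x_{2m+1}+x_{2m+2}=0$ and $\mathrm{DLB}(x)=2m$ if $x_{2m+1}+x_{2m+2}=1$; set $\mathrm{DLB}(1,\dots,1)=n$. The $\mathrm{DLB}$ problem is to maximize $\mathrm{DLB}$. A unary unbiased variation operator $V$ assigns to each $x\in\{0,1\}^n$ a probability distribution $V(x)$ on $\{0,1\}^n$ such that for all $x,y,z$, $\Pr[y=V(x)]=\Pr[y\oplus z=V(x\oplus z)]$, and for all permutations $\sigma$ of $[1..n]$, $\Pr[y=V(x)]=\Pr[\sigma(y)=V(\sigma(x))]$, where $\sigma(x)=(x_{\sigma(1)},\dots,x_{\sigma(n)})$. A unary unbiased black-box algorithm generates $x^{(0)}$ uniformly at random; for $t=1,2,\dots$, based solely on $(f(x^{(0)}),\dots,f(x^{(t-1)}))$, it chooses a unary unbiased variation operator $V$ and an index $i\in[0..t-1]$ and samples $x^{(t)}\sim V(x^{(i)})$; each search point is evaluated when generated. The runtime is the number of fitness evaluations until (and including) the first evaluation of an optimum. The unary unbiased black-box complexity of $\mathrm{DLB}$ is the infimum over all such algorithms of the expected runtime on $\mathrm{DLB}$.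 *)

(* Defs.v *)
From HB Require Import structures.
From mathcomp Require Import all_boot all_order all_algebra all_fingroup.
From mathcomp Require Import all_classical all_reals.
From mathcomp Require Import all_analysis.

Set Implicit Arguments.
Unset Strict Implicit.
Unset Printing Implicit Defensive.
Import Order.TTheory GRing.Theory Num.Theory.
Local Open Scope classical_set_scope.
Local Open Scope ring_scope.

Section BB.
Variable R : realType.
Variable n : nat.

(* bit strings x = (x_1,...,x_n), positions 0-indexed: x i with i : 'I_n *)
Definition bitstring := {ffun 'I_n -> bool}.

Definition bxor (x z : bitstring) : bitstring := [ffun i => x i (+) z i].
Definition bperm (s : 'S_n) (x : bitstring) : bitstring := [ffun i => x (s i)].

(* V x y = Pr[ y = V(x) ] *)
Definition variation_operator (V : bitstring -> bitstring -> R) : Prop :=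
  (forall x y, 0 <= V x y) /\ (forall x, \sum_(y : bitstring) V x y = 1).

Definition unary_unbiased (V : bitstring -> bitstring -> R) : Prop :=
  variation_operator V /\
  (forall x y z, V x y = V (bxor x z) (bxor y z)) /\
  (forall (s : 'S_n) x y, V x y = V (bperm s x) (bperm s y)).

(* A black-box algorithm: given the fitness history (f(x^0),...,f(x^(t-1)))
   it chooses a variation operator and an index i into the search history. *)
Record algorithm := Algorithm {
  alg_op  : seq nat -> bitstring -> bitstring -> R;
  alg_idx : seq nat -> nat }.

Definition unary_unbiased_alg (A : algorithm) : Prop :=
  forall h : seq nat,
    unary_unbiased (alg_op A h) /\ ((0 < size h)%N -> (alg_idx A h < size h)%N).

Variable f : bitstring -> nat.

Definition optimal (x : bitstring) : bool := [forall y, f y <= f x]%N.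

Definition x0 : bitstring := [ffun=> false].

(* probability that the first t+1 search points are exactly h = (x^0,...,x^t) *)
Definition hist_prob (A : algorithm) (t : nat) (h : t.+1.-tuple bitstring) : R :=
  (2%:R ^+ n)^-1 *
  \prod_(s < t)
     (let fh := map f (take s.+1 h) in
      alg_op A fh (nth x0 h (alg_idx A fh)) (nth x0 h s.+1)).

Definition prob_runtime_gt (A : algorithm) (t : nat) : R :=
  \sum_(h : t.+1.-tuple bitstring | all (fun x => ~~ optimal x) h) hist_prob A h.

(* E[T] = sum_{t >= 0} Pr[T > t]  (in \bar R; +oo if the series diverges,
   in particular if the optimum is not found with positive probability) *)
Definition expected_runtime (A : algorithm) : \bar R :=
  (\sum_(0 <= t <oo) (prob_runtime_gt A t)%:E)%E.

Definition uu_bb_complexity : \bar R :=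
  ereal_inf [set expected_runtime A | A in [set A | unary_unbiased_alg A]].

End BB.

(* DLB with 0-indexed bits: block l is (x_{2l}, x_{2l+1}) *)
Definition DLB (n : nat) (x : bitstring n) : nat :=
  let b j := nth false (map x (enum 'I_n)) j in
  let m := find (fun l => ~~ (b l.*2 && b l.*2.+1)) (iota 0 n./2) in
  if m == n./2 then n
  else if b m.*2 || b m.*2.+1 then m.*2 (* exactly one 1 in block m *)
  else m.*2.+1.                           (* block m is 00 *)

(* Main.v *)
Require Import Defs.
From HB Require Import structures.
From mathcomp Require Import all_boot all_order all_algebra all_fingroup.
From mathcomp Require Import all_classical all_reals.
From mathcomp Require Import all_analysis.
From mathcomp Require Import zify ring lra.
Import Order.TTheory GRing.Theory Num.Theory.

Set Implicit Arguments.
Unset Strict Implicit.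
Unset Printing Implicit Defensive.


Definition Pb (b : nat -> bool) l := ~~ (b l.*2 && b l.*2.+1).
Definition fm (n : nat) (b : nat -> bool) := find (Pb b) (iota 0 n./2).
Definition dlbf (n : nat) (b : nat -> bool) :=
  if fm n b == n./2 then n
  else if b (fm n b).*2 || b (fm n b).*2.+1 then (fm n b).*2 else (fm n b).*2.+1.

Lemma K2 n : (n./2).*2 <= n.
Proof. by rewrite -{2}[n]odd_double_half leq_addl. Qed.

Lemma fm_le n b : fm n b <= n./2.
Proof. by have := find_size (Pb b) (iota 0 n./2); rewrite size_iota. Qed.

Lemma fm_P n b : fm n b < n./2 -> Pb b (fm n b).
Proof.
move=> H; have Hh : has (Pb b) (iota 0 n./2) by rewrite has_find size_iota.
by have := nth_find 0 Hh; rewrite nth_iota // add0n.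
Qed.

Lemma fm_before n b l : l < fm n b -> b l.*2 && b l.*2.+1.
Proof.
move=> H; have Hl : l < n./2 by apply: leq_trans H (fm_le _ _).
by have := before_find 0 H; rewrite nth_iota // add0n /Pb => /negbFE.
Qed.

Lemma fm_eq n b m : m < n./2 -> Pb b m -> (forall l, l < m -> ~~ Pb b l) ->
  fm n b = m.
Proof.
move=> Hm Pm Hl.
have Hh : has (Pb b) (iota 0 n./2).
  by apply/hasP; exists m => //; rewrite mem_iota.
have [lt|gt|eq] := ltngtP (fm n b) m.
- have := nth_find 0 Hh; rewrite -/(fm n b) nth_iota ?add0n.
    by move: (Hl _ lt) => /negbTE ->.
  by apply: ltn_trans lt Hm.
- by have := before_find 0 gt; rewrite nth_iota // add0n Pm.
- by [].
Qed.

Lemma fm_gt n b m : m < n./2 -> (forall l, l <= m -> ~~ Pb b l) -> m < fm n b.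
Proof.
move=> Hm Hl; rewrite ltnNge; apply/negP => Hle.
have Hlt : fm n b < n./2 by apply: leq_ltn_trans Hle Hm.
by have := fm_P Hlt; rewrite (negbTE (Hl _ Hle)).
Qed.

Lemma dlbf_le n b : dlbf n b <= n.
Proof.
rewrite /dlbf; case: eqP => // /eqP Hne.
have Hlt : fm n b < n./2 by rewrite ltn_neqAle Hne fm_le.
have := K2 n; case: ifP => _; rewrite -!muln2 => H; lia.
Qed.

Lemma dlbf_even n b : ~~ odd (dlbf n b) -> dlbf n b < n ->
  exists j, j < n /\
   forall b', (forall k, b' k = if k == j then ~~ b k else b k) ->
     (dlbf n b)./2 < (dlbf n b')./2.
Proof.
rewrite /dlbf; case: eqP => [_|/eqP Hne]; first by rewrite ltnn.
have Hlt : fm n b < n./2 by rewrite ltn_neqAle Hne fm_le.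
set m := fm n b.
have Hn := K2 n.
case: ifP => Hb; last by rewrite /= odd_double.
move=> _ _; have Pm := fm_P Hlt; rewrite -/m /Pb in Pm.
exists (if b m.*2 then m.*2.+1 else m.*2); split.
  by case: ifP => _; rewrite -!muln2 in Hn *; lia.
move=> b' Hb'.
have Hgt : m < fm n b'.
  apply: fm_gt => // l; rewrite leq_eqVlt => /orP [/eqP ->|Hl].
    rewrite /Pb !Hb'; move: Hb Pm; case: (b m.*2); case: (b m.*2.+1) => //= _ _;
      rewrite ?eqxx; case: eqP => //; rewrite -!muln2; lia.
  have := fm_before Hl; rewrite /Pb !Hb'.
  have -> : (l.*2 == (if b m.*2 then m.*2.+1 else m.*2)) = false.
    by apply/negbTE; case: ifP => _; rewrite -!muln2; lia.
  have -> : (l.*2.+1 == (if b m.*2 then m.*2.+1 else m.*2)) = false.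
    by apply/negbTE; case: ifP => _; rewrite -!muln2; lia.
  by move=> ->.
rewrite doubleK; case: ifP => _; first exact: Hlt.
by case: ifP => _; rewrite /= ?doubleK ?uphalf_double.
Qed.

Lemma dlbf_odd n b : ~~ odd n -> odd (dlbf n b) ->
  exists j, j < n /\
   forall b', (forall k, b' k = if k == j then ~~ b k else b k) ->
     dlbf n b' = (dlbf n b).-1.
Proof.
move=> Hev; have Hn := K2 n.
rewrite /dlbf; case: eqP => [_|/eqP Hne]; first by rewrite (negbTE Hev).
have Hlt : fm n b < n./2 by rewrite ltn_neqAle Hne fm_le.
set m := fm n b.
case: ifP => Hb; first by rewrite odd_double.
move=> _; move/negbT: Hb; rewrite negb_or => /andP [Hb1 Hb2].
exists m.*2; split; first by rewrite -!muln2 in Hn *; lia.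
move=> b' Hb'.
have Hf : fm n b' = m.
  apply: fm_eq => //.
    rewrite /Pb !Hb' eqxx (negbTE Hb1) /=.
    by case: eqP => [|_]; [rewrite -!muln2; lia | rewrite (negbTE Hb2)].
  move=> l Hl; have := fm_before Hl; rewrite /Pb !Hb' negbK.
  have -> : (l.*2 == m.*2) = false by apply/negbTE; rewrite -!muln2; lia.
  have -> : (l.*2.+1 == m.*2) = false by apply/negbTE; rewrite -!muln2; lia.
  by [].
by rewrite Hf (negbTE Hne) Hb' eqxx (negbTE Hb1) /=.
Qed.


Section Drift.
Local Open Scope ring_scope.
Variables (R : realType) (n : nat) (f : bitstring n -> nat) (A : algorithm R n).
Variable Phi : seq (bitstring n) -> R.
Hypothesis Hidx : forall s, (0 < size s)%N -> (alg_idx A s < size s)%N.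
Hypothesis Hop0 : forall s x y, 0 <= alg_op A s x y.
Hypothesis HPhi0 : forall h, 0 <= Phi h.

Definition nonopt (x : bitstring n) := ~~ optimal f x.

Definition nxt (h : seq (bitstring n)) y :=
  alg_op A (map f h) (nth (x0 n) h (alg_idx A (map f h))) y.

Hypothesis Hdrift : forall t (h : t.+1.-tuple (bitstring n)), all nonopt h ->
  \sum_(y : bitstring n) nxt h y * Phi (rcons h y) <= Phi h - 1.

Lemma hist_prob_ge0 t (h : t.+1.-tuple (bitstring n)) : 0 <= hist_prob f A h.
Proof.
rewrite /hist_prob; apply: mulr_ge0; first by rewrite invr_ge0 exprn_ge0.
by apply: prodr_ge0 => i _; apply: Hop0.
Qed.

Lemma hist_prob_rcons t (h : t.+1.-tuple (bitstring n)) y :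
  hist_prob f A [tuple of rcons h y] = hist_prob f A h * nxt h y.
Proof.
rewrite /hist_prob big_ord_recr /= mulrA; congr (_ * _ * _).
  apply: eq_bigr => s _ /=.
  have Hs : (s.+1 <= size h)%N by rewrite size_tuple ltnW // ltnS ltn_ord.
  rewrite -cats1 takel_cat //.
  have Hi : (alg_idx A (map f (take s.+1 h)) < size h)%N.
    apply: leq_trans (Hidx _) _; first by rewrite size_map size_take_min; lia.
    by rewrite size_map size_take_min; lia.
  rewrite cats1 !nth_rcons Hi.
  by rewrite size_tuple ltnS ltn_ord.
rewrite -cats1 takel_cat ?size_tuple // take_oversize ?size_tuple // cats1 /nxt.
have Hi : (alg_idx A (map f h) < size h)%N.
  by rewrite -(size_map f) Hidx // size_map size_tuple.
by rewrite !nth_rcons Hi size_tuple ltnn eqxx.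
Qed.

Definition rc t (p : t.+1.-tuple (bitstring n) * bitstring n) :
  t.+2.-tuple (bitstring n) := [tuple of rcons p.1 p.2].

Lemma rc_bij t : bijective (@rc t).
Proof.
apply: inj_card_bij.
  move=> [p1 y1] [p2 y2] /(congr1 val) /= /rcons_inj [/val_inj -> ->] //.
by rewrite card_prod !card_tuple expnS mulnC.
Qed.

Lemma sum_split t (F : t.+2.-tuple (bitstring n) -> R) :
  \sum_(h' : t.+2.-tuple (bitstring n)) F h' =
  \sum_(h : t.+1.-tuple (bitstring n)) \sum_(y : bitstring n) F [tuple of rcons h y].
Proof.
rewrite (reindex (@rc t)); last by apply: onW_bij; apply: rc_bij.
by rewrite pair_big.
Qed.

Definition S t := \sum_(h : t.+1.-tuple (bitstring n) | all nonopt h)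
  hist_prob f A h * Phi h.

Lemma S_step t : S t.+1 <= S t - prob_runtime_gt f A t.
Proof.
rewrite /S /prob_runtime_gt -sumrB big_mkcond sum_split /=.
rewrite [X in _ <= X]big_mkcond /=.
apply: ler_sum => h _.
case: ifP => Hh.
  apply: le_trans (_ : \sum_y hist_prob f A h * (nxt h y * Phi (rcons h y)) <= _).
    apply: ler_sum => y _; rewrite all_rcons; case: ifP => _.
      by rewrite hist_prob_rcons mulrA.
    by apply: mulr_ge0; [apply: hist_prob_ge0 | apply: mulr_ge0 (Hop0 _ _ _) (HPhi0 _)].
  rewrite -mulr_sumr -[X in _ <= _ - X](mulr1 (hist_prob f A h)) -mulrBr.
  apply: ler_wpM2l; [exact: hist_prob_ge0 | exact: Hdrift].
apply: le_trans (_ : \sum_(y : bitstring n) (0:R) <= _).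
  by apply: ler_sum => y _; rewrite all_rcons Hh andbF.
by rewrite big1.
Qed.

Lemma S_ge0 t : 0 <= S t.
Proof.
by apply: sumr_ge0 => h _; apply: mulr_ge0; [apply: hist_prob_ge0|apply: HPhi0].
Qed.

Lemma prob_ge0 t : 0 <= prob_runtime_gt f A t.
Proof. by apply: sumr_ge0 => h _; apply: hist_prob_ge0. Qed.

Lemma tele T : \sum_(t < T) prob_runtime_gt f A t + S T <= S 0.
Proof.
elim: T => [|T IH]; first by rewrite big_ord0 add0r.
rewrite big_ord_recr /=; apply: le_trans IH.
rewrite -addrA lerD2l; have := S_step T; lra.
Qed.

Variable M : R.
Hypothesis HM : forall h : 1.-tuple (bitstring n), Phi h <= M.

Lemma S0_le : S 0 <= M.
Proof.
rewrite /S; apply: le_trans (_ : \sum_(h : 1.-tuple (bitstring n)) (2%:R ^+ n)^-1 * M <= _).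
  rewrite big_mkcond /=; apply: ler_sum => h _; case: ifP => _.
    rewrite /hist_prob big_ord0 mulr1; apply: ler_wpM2l; last exact: HM.
    by rewrite invr_ge0 exprn_ge0.
  by apply: mulr_ge0; [rewrite invr_ge0 exprn_ge0 | apply: le_trans (HM h); apply: HPhi0].
rewrite sumr_const card_tuple card_ffun card_bool card_ord expn1.
rewrite -[_ *+ (_ ^ _)]mulr_natl natrX mulrA mulfV ?mul1r //.

Qed.

Lemma expected_le : (expected_runtime f A <= M%:E)%E.
Proof.
rewrite /expected_runtime; apply: lime_le.
  by apply: is_cvg_nneseries => k _ _; rewrite lee_fin prob_ge0.
apply: nearW => N; rewrite sumEFin lee_fin.
apply: le_trans (S0_le); apply: le_trans (tele N).
rewrite big_mkord -[X in X <= _]addr0 lerD2l; exact: S_ge0.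
Qed.

End Drift.


Section Bits.
Variable n : nat.
Definition bx (x : bitstring n) (k : nat) := nth false (map x (enum 'I_n)) k.
Definition flip (x : bitstring n) (i : 'I_n) : bitstring n :=
  [ffun k => if k == i then ~~ x k else x k].

Lemma DLBE x : DLB x = dlbf n (bx x).
Proof. by []. Qed.

Lemma bx_ord x (i : 'I_n) : bx x i = x i.
Proof. by rewrite /bx (nth_map i) ?size_enum_ord ?ltn_ord // nth_ord_enum. Qed.

Lemma bx_ge x k : (n <= k)%N -> bx x k = false.
Proof. by move=> H; rewrite /bx nth_default // size_map size_enum_ord. Qed.

Lemma bx_flip x i k : bx (flip x i) k = if k == i then ~~ bx x k else bx x k.
Proof.
case: (ltnP k n) => Hk.
  by rewrite -[k]/(nat_of_ord (Ordinal Hk)) !bx_ord ffunE.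
rewrite !bx_ge //; case: eqP => // Heq; move: (ltn_ord i); lia.
Qed.

Lemma DLB_le (x : bitstring n) : (DLB x <= n)%N.
Proof. exact: dlbf_le. Qed.

Lemma nonopt_lt (x : bitstring n) : ~~ optimal (@DLB n) x -> (DLB x < n)%N.
Proof.
move=> Hno; rewrite ltnNge; apply/negP => H; move/negP: Hno; apply.
by apply/forallP => y; apply: leq_trans (DLB_le y) H.
Qed.
End Bits.

Section Op.
Local Open Scope ring_scope.
Variables (R : realType) (n : nat).
Hypothesis n_gt0 : (0 < n)%N.

Definition op (x y : bitstring n) : R :=
  n%:R^-1 * \sum_(i < n) (y == flip x i)%:R.

Lemma op_sum x (g : bitstring n -> R) :
  \sum_y op x y * g y = n%:R^-1 * \sum_(i < n) g (flip x i).
Proof.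
under eq_bigr do rewrite -mulrA.
rewrite -mulr_sumr; congr (_ * _).
under eq_bigr do rewrite mulr_suml.
rewrite exchange_big /=; apply: eq_bigr => i _.
rewrite (bigD1 (flip x i)) //= eqxx mul1r big1 ?addr0 // => y /negbTE ->.
by rewrite mul0r.
Qed.

Lemma flip_xor (x z : bitstring n) i : flip (bxor x z) i = bxor (flip x i) z.
Proof.
by apply/ffunP => k; rewrite !ffunE; case: eqP => _; rewrite ?ffunE // addNb.
Qed.

Lemma bxorK (z : bitstring n) : cancel (fun y : bitstring n => bxor y z) (fun y => bxor y z).
Proof. by move=> y; apply/ffunP => k; rewrite !ffunE addbK. Qed.

Lemma bpermK (s : 'S_n) : cancel (bperm s) (bperm (s^-1)%g).
Proof. by move=> y; apply/ffunP => k; rewrite !ffunE permKV. Qed.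

Lemma flip_perm (s : 'S_n) (x : bitstring n) j : flip (bperm s x) ((s^-1)%g j) = bperm s (flip x j).
Proof.
apply/ffunP => k; rewrite !ffunE.
by rewrite -(inj_eq (@perm_inj _ s)) permKV.
Qed.

Lemma op_unbiased : unary_unbiased op.
Proof.
split; [split|split].
- move=> x y; apply: mulr_ge0; first by rewrite invr_ge0 ler0n.
  by apply: sumr_ge0 => i _; rewrite ler0n.
- move=> x; have := op_sum x (fun _ => 1); under eq_bigr do rewrite mulr1.
  move=> ->; rewrite sumr_const card_ord mulVf // pnatr_eq0 -lt0n //.
- move=> x y z; rewrite /op; congr (_ * _); apply: eq_bigr => i _.
  by rewrite flip_xor (inj_eq (can_inj (bxorK z))).
- move=> s x y; rewrite /op; congr (_ * _).
  rewrite (reindex_inj (@perm_inj _ s)) /=; apply: eq_bigr => j _.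
  by rewrite -[in RHS](permK s j) flip_perm (inj_eq (can_inj (bpermK s))).
Qed.
End Op.

Definition acc (o v : nat) := if odd o then (o./2 <= v./2)%N else (o./2 < v./2)%N.
Definition stp (st : nat * nat * nat) (v : nat) :=
  let: (c, cv, k) := st in if acc cv v then (k, v, k.+1) else (c, cv, k.+1).
Definition cst (s : seq nat) := foldl stp (0, head 0 s, 1)%N (behead s).
Definition idx (s : seq nat) := (cst s).1.1.

Lemma cst_rcons s v : (0 < size s)%N -> cst (rcons s v) = stp (cst s) v.
Proof. by case: s => // a s _; rewrite /cst rcons_cons /= foldl_rcons. Qed.

Lemma cst_inv s : (0 < size s)%N ->
  [/\ (idx s < size s)%N, (cst s).1.2 = nth 0 s (idx s) & (cst s).2 = size s].
Proof.
elim/last_ind: s => // s v IH _.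
case: (posnP (size s)) => Hs.
  by case: s Hs IH => // _ _; rewrite /idx /cst.
have [H1 H2 H3] := IH Hs.
rewrite /idx cst_rcons //; move: H1 H2 H3; rewrite /idx.
case: (cst s) => [[c cv] k] /= H1 H2 H3; subst.
rewrite /stp size_rcons; case: ifP => _ /=.
  by rewrite nth_rcons ltnn eqxx.
by rewrite nth_rcons H1 ltnW.
Qed.

Lemma idx_rcons s v : (0 < size s)%N ->
  idx (rcons s v) = if acc (nth 0 s (idx s)) v then size s else idx s.
Proof.
move=> Hs; have [H1 H2 H3] := cst_inv Hs.
rewrite {1}/idx cst_rcons //; move: H2 H3; rewrite /idx.
by case: (cst s) => [[c cv] k] /= -> ->; rewrite /stp; case: ifP.
Qed.

Section Pot.
Variable n : nat.
Hypothesis n_even : ~~ odd n.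
Hypothesis n_gt0 : (0 < n)%N.

Definition pot (x : bitstring n) : nat :=
  2 * n * (n./2 - (DLB x)./2) + n * odd (DLB x).

Lemma pot_le x : (pot x <= 2 * n ^ 2)%N.
Proof.
rewrite /pot; have Hk := K2 n.
have : (2 * n * (n./2 - (DLB x)./2) <= 2 * n * n./2)%N by rewrite leq_mul // leq_subr.
have : (n * odd (DLB x) <= n * 1)%N by rewrite leq_mul // leq_b1.
rewrite -muln2 in Hk; nia.
Qed.

Lemma half_lt v : (v < n)%N -> (v./2 < n./2)%N.
Proof.
move=> H; rewrite ltn_half_double; have := odd_double_half n.
rewrite (negbTE n_even) add0n => ->; exact H.
Qed.

Definition gstep (x y : bitstring n) :=
  if acc (DLB x) (DLB y) then pot y else pot x.

Lemma gstep_le x y : (DLB x < n)%N -> (gstep x y <= pot x)%N.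
Proof.
move=> Hx; rewrite /gstep /acc /pot; case: ifP => // Hacc.
have Hb := half_lt Hx; have Ho := leq_b1 (odd (DLB y)).
have Hm : (n * odd (DLB y) <= n * 1)%N by rewrite leq_mul.
move: Hacc; case: (odd (DLB x)) => Hab.
  have : (2 * n * (n./2 - (DLB y)./2) <= 2 * n * (n./2 - (DLB x)./2))%N.
    by apply: leq_mul => //; lia.
  lia.
have : (2 * n * (n./2 - (DLB y)./2) + 2 * n <= 2 * n * (n./2 - (DLB x)./2))%N.
  by rewrite -mulnSr; apply: leq_mul => //; lia.
lia.
Qed.

Lemma gstep_good (x : bitstring n) : (DLB x < n)%N ->
  exists i : 'I_n, (gstep x (flip x i) + n <= pot x)%N.
Proof.
move=> Hx; have Hhalf := half_lt Hx.
case Hodd: (odd (DLB x)).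
  have Ho' : odd (dlbf n (bx x)) by rewrite -DLBE.
  have [j [Hj Hb']] := dlbf_odd n_even Ho'.
  exists (Ordinal Hj).
  have Hv : DLB (flip x (Ordinal Hj)) = (DLB x).-1.
    by rewrite !DLBE; apply: Hb' => k; rewrite bx_flip.
  have Ev := odd_double_half (DLB x); rewrite Hodd in Ev.
  have Hm : DLB (flip x (Ordinal Hj)) = ((DLB x)./2).*2.
    by rewrite Hv -{1}Ev.
  rewrite /gstep /acc Hodd Hm doubleK leqnn /pot Hm doubleK odd_double Hodd.
  lia.
have He' : ~~ odd (dlbf n (bx x)) by rewrite -DLBE Hodd.
have Hl' : (dlbf n (bx x) < n)%N by rewrite -DLBE.
have [j [Hj Hb']] := dlbf_even He' Hl'.
exists (Ordinal Hj).
have Hv : ((DLB x)./2 < (DLB (flip x (Ordinal Hj)))./2)%N.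
  by rewrite !DLBE; apply: Hb' => k; rewrite bx_flip.
rewrite /gstep /acc Hodd Hv /pot Hodd.
have Ho := leq_b1 (odd (DLB (flip x (Ordinal Hj)))).
have Hm : (n * odd (DLB (flip x (Ordinal Hj))) <= n * 1)%N by rewrite leq_mul.
have : (2 * n * (n./2 - (DLB (flip x (Ordinal Hj)))./2) + 2 * n <=
        2 * n * (n./2 - (DLB x)./2))%N.
  by rewrite -mulnSr; apply: leq_mul => //; lia.
lia.
Qed.

Lemma sum_step (x : bitstring n) : (DLB x < n)%N ->
  (\sum_(i < n) gstep x (flip x i) + n <= n * pot x)%N.
Proof.
move=> Hx; have [i0 Hi0] := gstep_good Hx.
have -> : (n * pot x = \sum_(i < n) pot x)%N by rewrite sum_nat_const card_ord.
rewrite (bigD1 i0) //= [X in (_ <= X)%N](bigD1 i0) //=.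
have : (\sum_(i < n | i != i0) gstep x (flip x i) <= \sum_(i < n | i != i0) pot x)%N.
  by apply: leq_sum => i _; apply: gstep_le.
by move=> H; rewrite addnAC; apply: leq_add.
Qed.
End Pot.

Section Final.
Local Open Scope ring_scope.
Variables (R : realType) (n : nat).
Hypothesis n_even : ~~ odd n.
Hypothesis n_gt0 : (0 < n)%N.

Definition Alg : algorithm R n := Algorithm (fun _ : seq nat => @op R n) idx.

Definition Phi (h : seq (bitstring n)) : R :=
  (pot (nth (x0 n) h (idx (map (@DLB n) h))))%:R.

Lemma Alg_unbiased : unary_unbiased_alg Alg.
Proof.
move=> h; split; first exact: op_unbiased.
by move=> Hs; have [] := cst_inv Hs.
Qed.

Lemma Phi_rcons (h : seq (bitstring n)) y : (0 < size h)%N ->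
  Phi (rcons h y) =
  (gstep (nth (x0 n) h (idx (map (@DLB n) h))) y)%:R.
Proof.
move=> Hs; have Hs' : (0 < size (map (@DLB n) h))%N by rewrite size_map.
have [Hi _ _] := cst_inv Hs'; rewrite size_map in Hi.
rewrite /Phi map_rcons idx_rcons // (nth_map (x0 n)) // /gstep size_map.
by case: ifP => _; rewrite nth_rcons ?ltnn ?eqxx ?Hi.
Qed.

Lemma Alg_drift t (h : t.+1.-tuple (bitstring n)) : all (nonopt (@DLB n)) h ->
  \sum_(y : bitstring n) nxt (@DLB n) Alg h y * Phi (rcons h y) <= Phi h - 1.
Proof.
move=> Hall.
have Hs : (0 < size h)%N by rewrite size_tuple.
have Hs' : (0 < size (map (@DLB n) h))%N by rewrite size_map.
have [Hi _ _] := cst_inv Hs'; rewrite size_map in Hi.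
set xc := nth (x0 n) h (idx (map (@DLB n) h)).
have Hxc : (DLB xc < n)%N.
  by apply: nonopt_lt; move/allP: Hall; apply; apply: mem_nth.
rewrite /nxt /= -/xc op_sum.
under eq_bigr do rewrite Phi_rcons // -/xc.
rewrite -natr_sum /Phi -/xc.
have H := sum_step n_even n_gt0 Hxc.
have H' : (\sum_(i < n) gstep xc (flip xc i))%:R + n%:R <= n%:R * (pot xc)%:R :> R.
  by rewrite -natrD -natrM ler_nat.
have Hn : n%:R != 0 :> R by rewrite pnatr_eq0 -lt0n.
apply: le_trans (_ : n%:R^-1 * (n%:R * (pot xc)%:R - n%:R) <= _).
  by apply: ler_wpM2l; [rewrite invr_ge0 ler0n | lra].
by rewrite mulrBr mulrA mulVf // mul1r.
Qed.

Lemma Alg_expected :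
  (expected_runtime (@DLB n) Alg <= ((2 * n ^ 2)%N%:R)%:E)%E.
Proof.
apply: (@expected_le R n (@DLB n) Alg Phi).
- by move=> s Hs; have [] := cst_inv Hs.
- by move=> s x y; have [[H0 _] _] := op_unbiased R n_gt0; apply: H0.
- by move=> h; rewrite /Phi ler0n.
- exact: Alg_drift.
- by move=> h; rewrite /Phi ler_nat pot_le.
Qed.
End Final.

Local Open Scope ring_scope.
Theorem lemma10 (R : realType) :
  exists (C : R) (n0 : nat), forall n : nat,
    ~~ odd n -> (0 < n)%N -> (n0 <= n)%N ->
    (uu_bb_complexity R (@DLB n) <= (C * (n%:R) ^+ 2)%:E)%E.
Proof.
exists 2%:R, 0%N => n Hev Hn _.
apply: le_trans (ereal_inf_lbound _) _.
  by exists (Alg R n); [exact: Alg_unbiased | reflexivity].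
by have := Alg_expected R Hev Hn; rewrite natrM natrX.
Qed.
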